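(* Assume the setting and standing assumptions described in the context. If for some $\Delta\in\mathcal{D}$ the function $\kappa\mapsto\det[-(B\Delta C+\kappa^2J_2+\kappa^4J_4)]$ is initially positive, then there exists $\tilde\kappa>0$ such that $\rho(\Delta,\kappa)<0$ for all $0<\kappa\le\tilde\kappa$.
   Context: Let $n,m\ge 1$, $B\in\mathbb{Z}^{n\times m}$, $C\in\mathbb{Z}^{m\times n}$. Given bounds $0\le \Delta_j^-\le \Delta_j^+<\infty$ ($j=1,\dots,m$), let $\mathcal{D}$ be the set of diagonal matrices $\Delta=\mathrm{diag}(\Delta_1,\dots,\Delta_m)$ with $\Delta_j^-\le\Delta_j\le\Delta_j^+$. Let $J_2,J_4\in\mathbb{R}^{n\times n}$ be symmetric, with $J_2$ indefinite, $J_4$ negative semidefinite, and such that there exists $\bar\kappa$ with $\bar\kappa^2J_2+\bar\kappa^4J_4$ negative definite. Assumption: for every $\Delta\in\mathcal{D}$, $B\Delta C$ is singular and has $n-1$ eigenvalues (with multiplicity) with negative real part, and there is a nonzero $v\ge0$ with $v^\top B=0$. For real $\kappa\ge0$, $\rho(\Delta,\kappa)$ denotes the spectral abscissa (maximum real part of the eigenvalues) of $B\Delta C+\kappa^2J_2+\kappa^4J_4$. A function $f$ on $[0,\infty)$ is initially positive if there is $\hat\kappa>0$ with $f(\kappa)>0$ for all $\kappa\in(0,\hat\kappa)$. *)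

(* Defs.v *)
From HB Require Import structures.
From mathcomp Require Import all_boot all_order all_algebra.
From mathcomp Require Import classical_sets reals.
From mathcomp Require Import complex.
Set Implicit Arguments. Unset Strict Implicit. Unset Printing Implicit Defensive.
Import Order.TTheory GRing.Theory Num.Theory.
Local Open Scope ring_scope.
Local Open Scope classical_set_scope.

Definition cmx (R : realType) (n : nat) (A : 'M[R]_n) : 'M[R[i]]_n :=
  map_mx (fun x => (x%:C)%C) A.

Definition eigenvalues (R : realType) (n : nat) (A : 'M[R]_n) : set R[i] :=
  [set z | root (char_poly (cmx A)) z].

Definition spectral_abscissa (R : realType) (n : nat) (A : 'M[R]_n) : R :=
  sup [set complex.Re z | z in eigenvalues A].

(* "A has n-1 eigenvalues (counted with algebraic multiplicity) with negative
    real part" *)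
Definition neg_eigs_mult (R : realType) (n : nat) (A : 'M[R]_n) (k : nat) : Prop :=
  exists s : seq R[i], size s = k /\ (forall z, z \in s -> complex.Re z < 0) /\
    (\prod_(z <- s) ('X - z%:P)) %| char_poly (cmx A).

Definition quad (R : realType) (n : nat) (J : 'M[R]_n) (x : 'cV[R]_n) : R :=
  (x^T *m J *m x) 0 0.

Definition indefinite (R : realType) (n : nat) (J : 'M[R]_n) : Prop :=
  (exists x, 0 < quad J x) /\ (exists y, quad J y < 0).
Definition neg_semidef (R : realType) (n : nat) (J : 'M[R]_n) : Prop :=
  forall x, quad J x <= 0.
Definition neg_def (R : realType) (n : nat) (J : 'M[R]_n) : Prop :=
  forall x, x != 0 -> quad J x < 0.

Definition intR (R : realType) (p q : nat) (M : 'M[int]_(p, q)) : 'M[R]_(p, q) :=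
  map_mx (fun z => z%:~R) M.

Definition Mk (R : realType) (n m : nat) (B : 'M[int]_(n, m)) (C : 'M[int]_(m, n))
  (d : 'rV[R]_m) (J2 J4 : 'M[R]_n) (k : R) : 'M[R]_n :=
  intR R B *m diag_mx d *m intR R C + (k ^+ 2) *: J2 + (k ^+ 4) *: J4.

Definition in_box (R : realType) (m : nat) (dm dp d : 'rV[R]_m) : Prop :=
  forall j, dm 0 j <= d 0 j <= dp 0 j.

Definition initially_positive (R : realType) (f : R -> R) : Prop :=
  exists kh, 0 < kh /\ forall k, 0 < k < kh -> 0 < f k.

(* Main.v *)
Require Import Defs.
From HB Require Import structures.
From mathcomp Require Import all_boot all_order all_algebra.
From mathcomp Require Import classical_sets reals.
From mathcomp Require Import complex.
From mathcomp Require Import polyrcf lra zify.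
Import Order.TTheory GRing.Theory Num.Theory.
Local Open Scope ring_scope.

Set Implicit Arguments. Unset Strict Implicit. Unset Printing Implicit Defensive.

Lemma sum_ind1 (F : pzRingType) (N : nat) (c : nat -> F) : (1 < N)%N ->
  \sum_(i < N) c i * (val i == 1%N)%:R = c 1%N.
Proof.
move=> hN; rewrite (bigD1 (Ordinal hN)) //= mulr1 big1 ?addr0 //.
move=> i /eqP hi; case: (eqVneq (val i) 1%N) => e.
  by exfalso; apply: hi; apply: val_inj.
by rewrite mulr0.
Qed.

Lemma diff_est (F : numDomainType) (N : nat) (c : nat -> F) (z w r : F) :
  (1 < N)%N -> `|z| <= r -> `|w| <= r -> r <= 1 ->
  exists E, \sum_(i < N) c i * z ^+ i - \sum_(i < N) c i * w ^+ i = (z - w) * (c 1%N + E)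
     /\ `|E| <= r * \sum_(i < N) `|c i| * i%:R.
Proof.
move=> hN hz hw hr1.
have r0 : 0 <= r by apply: le_trans hz.
pose S i := \sum_(j < i) z ^+ (i.-1 - j) * w ^+ j.
exists (\sum_(i < N) c i * (S i - (val i == 1%N)%:R)); split.
  rewrite -sumrB.
  have -> : \sum_(i < N) (c i * z ^+ i - c i * w ^+ i) = (z - w) * \sum_(i < N) c i * S i.
    rewrite mulr_sumr; apply: eq_bigr => i _.
    by rewrite -mulrBr subrXX mulrCA.
  congr (_ * _).
  rewrite -(sum_ind1 c hN) -big_split /=; apply: eq_bigr => i _.
  by rewrite -mulrDr addrC subrK.
rewrite mulr_sumr; apply: le_trans (ler_norm_sum _ _ _) _; apply: ler_sum => i _.
rewrite normrM mulrCA; apply: ler_wpM2l; first by [].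
case: i => [[|[|m]] /= _].
- by rewrite /S big_ord0 subr0 normr0 mulr0.
- by rewrite /S big_ord1 /= expr0 mulr1 subrr normr0 mulr1.
- rewrite subr0 /S; apply: le_trans (ler_norm_sum _ _ _) _.
  apply: le_trans (_ : \sum_(j < m.+2) r <= _).
    apply: ler_sum => j _; rewrite normrM !normrX.
    apply: le_trans (_ : r ^+ (m.+1 - j) * r ^+ j <= _).
      by apply: ler_pM; rewrite ?exprn_ge0 ?normr_ge0 // lerXn2r // ?nnegrE ?normr_ge0.
    rewrite -exprD subnK; last by rewrite -ltnS.
    by rewrite exprS ler_piMr // exprn_ile1.
  by rewrite sumr_const card_ord mulr_natr.
Qed.
Lemma sum_widen_le (F : numDomainType) (n N : nat) (f : nat -> F) :
  (n <= N)%N -> (forall i, 0 <= f i) -> \sum_(i < n) f i <= \sum_(i < N) f i.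
Proof.
move=> hnN h0; rewrite -!(big_mkord xpredT f) (big_cat_nat (leq0n n) hnN) /=.
by rewrite lerDl sumr_ge0.
Qed.

Lemma cauchyC (F : numFieldType) (p : {poly F}) x N :
  p \is monic -> (size p <= N)%N -> root p x -> `|x| <= 1 + \sum_(i < N) `|p`_i|.
Proof.
move=> mp hN /eqP rpx.
have sum0 : 0 <= \sum_(i < N) `|p`_i| by apply: sumr_ge0.
have [x_le1|x_gt1] := real_leP (normr_real x) (@real1 F).
  by apply: le_trans x_le1 _; rewrite lerDl.
have np0 : p != 0 by apply: monic_neq0.
have [sp_le1|sp_gt1] := leqP (size p) 1.
  move: rpx; rewrite [p]size1_polyC // hornerC => c0.
  by move: mp; rewrite [p]size1_polyC // monicE lead_coefC c0 eq_sym oner_eq0.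
have x_gt0 : 0 < `|x| by rewrite (lt_trans ltr01).
pose n := (size p).-1; have n_gt0 : (n > 0)%N by rewrite /n -subn1 subn_gt0.
have lc1 : p`_n = 1 by move: mp => /monicP.
have H1 : `|x| ^+ n <= \sum_(i < n) `|p`_i * x ^+ i|.
  rewrite (le_trans _ (ler_norm_sum _ _ _))//.
  have := rpx; rewrite horner_coef polySpred// !big_ord_recr/= -/n lc1 mul1r.
  by move=> /(canRL (@addrK _ _))->; rewrite sub0r normrN normrX.
have H2 : \sum_(i < n) `|p`_i * x ^+ i| <= (\sum_(i < n) `|p`_i|) * `|x| ^+ n.-1.
  rewrite mulr_suml; apply: ler_sum => i _.
  rewrite normrM normrX ler_wpM2l //.
  by apply: ler_weXn2l; [apply: ltW | rewrite -ltnS prednK].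
have H3 : `|x| <= \sum_(i < n) `|p`_i|.
  move: (le_trans H1 H2); rewrite -[n in _ ^+ n]prednK // exprS.
  by rewrite ler_pM2r // exprn_gt0.
have H4 : \sum_(i < n) `|p`_i| <= \sum_(i < N) `|p`_i|.
  apply: (@sum_widen_le _ _ _ (fun i => `|p`_i|)) => //.
  rewrite /n; apply: leq_trans hN; exact: leq_pred.
by rewrite (le_trans H3) // (le_trans H4) // lerDr.
Qed.
Lemma poly_lip (F : numDomainType) (P : {poly F}) k : 0 <= k -> k <= 1 ->
  `|P.[k] - P.[0]| <= k * \sum_(j < size P) `|P`_j|.
Proof.
move=> k0 k1; rewrite horner_coef0 horner_coef.
case E: (size P) => [|m].
  by move/eqP: E; rewrite size_poly_eq0 => /eqP ->; rewrite !big_ord0 coef0 subrr normr0 mulr0.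
rewrite big_ord_recl expr0 mulr1 addrAC subrr add0r.
rewrite [X in _ <= k * X]big_ord_recl mulrDr.
apply: le_trans (ler_norm_sum _ _ _) _.
apply: le_trans (_ : k * \sum_(i < m) `|P`_(bump 0 i)| <= _); last first.
  by rewrite lerDr mulr_ge0.
rewrite mulr_sumr; apply: ler_sum => i _.
rewrite normrM normrX (ger0_norm k0) mulrC ler_wpM2r //.
by rewrite lift0 exprS ler_piMr // exprn_ile1.
Qed.

Lemma size_map_le (aR rR : nzSemiRingType) (f : aR -> rR) (p : {poly aR}) :
  (size (map_poly f p) <= size p)%N.
Proof. by rewrite /map_poly size_poly. Qed.

Lemma normC_R (R : rcfType) (x : R) : `|x%:C%C| = `|x|%:C%C.
Proof. by rewrite normc_def /= expr0n /= addr0 sqrtr_sqr. Qed.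

Lemma Re_le_norm_sub (R : rcfType) (z s : R[i]) :
  0 <= complex.Re z -> complex.Re s < 0 -> (- complex.Re s)%:C%C <= `|z - s|.
Proof.
move=> hz hs; rewrite normc_def lecR.
case: z hz => a b /= ha; case: s hs => c d /= hc.
apply: le_trans (_ : `|a - c| <= _).
  by rewrite ger0_norm ?lerDr // subr_ge0 (le_trans (ltW hc)).
rewrite -sqrtr_sqr ler_sqrt ?lerDl ?sqr_ge0 //.
by rewrite addr_ge0 ?sqr_ge0.
Qed.
Lemma c1_pos (R : realType) (p0 : {poly R}) (s : seq R[i]) :
  p0 \is monic ->
  map_poly (real_complex R) p0 = 'X * \prod_(z <- s) ('X - z%:P) ->
  (forall z, z \in s -> complex.Re z < 0) ->
  0 < p0`_1.
Proof.
move=> mp hp hs.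
have Q0 : \prod_(z <- s) (0 - z) != 0 :> R[i].
  rewrite prodf_seq_neq0; apply/allP => z zs /=; rewrite sub0r oppr_eq0.
  by apply/eqP => z0; move: (hs z zs); rewrite z0 /= ltxx.
have c1C : (p0`_1)%:C%C = \prod_(z <- s) (0 - z).
  have := congr1 (fun q : {poly R[i]} => q`_1) hp; rewrite coef_map /= => ->.
  by rewrite coefXM /= -horner_coef0 horner_prod; apply: eq_bigr => z _; rewrite hornerXsubC.
have c1n0 : p0`_1 != 0.
  by apply/eqP => e; move: Q0; rewrite -c1C e eqxx.
have r0 : root p0 0.
  apply/eqP; apply: (@complexI R).
  by rewrite -[RHS]/((0:R)%:C%C) -horner_map /= hp hornerM hornerX mul0r.
have [q hq] := factor_theorem _ _ r0.
rewrite subr0 in hq.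
have qc : q`_0 = p0`_1 by rewrite hq coefMX.
have lq : lead_coef q = 1 by move/monicP: mp; rewrite hq lead_coefMX.
have qpos : forall x, 0 < x -> q.[x] != 0.
  move=> x x0; apply/negP => /eqP qx.
  have : (map_poly (real_complex R) p0).[x%:C%C] = 0.
    by rewrite horner_map hq hornerM qx mul0r.
  rewrite hp hornerM hornerX horner_prod; apply/eqP; rewrite mulf_eq0 negb_or.
  apply/andP; split; first by rewrite eq_complex /= eqxx andbT gt_eqF.
  rewrite prodf_seq_neq0; apply/allP => z zs /=; rewrite hornerXsubC.
  apply/eqP => e; have := congr1 (@complex.Re R) e; rewrite raddfB /=.
  by move=> /eqP; rewrite subr_eq0 => /eqP ez; move: (hs z zs); rewrite -ez ltNge ltW.
have lq0 : 0 < lead_coef q by rewrite lq ltr01.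
have [b hb] := poly_pinfty_gt_lc lq0.
have hq0 : q.[0] = p0`_1 by rewrite horner_coef0.
case: (ltgtP 0 (p0`_1)) => // [c1neg|c10]; last by move: c1n0; rewrite -c10 eqxx.
pose b' := Num.max b 1.
have qb : 1 <= q.[b'] by rewrite -lq; apply: hb; rewrite le_max lexx.
have hb0 : 0 <= b' by rewrite le_max ler01 orbT.
have hprod : q.[0] * q.[b'] <= 0.
  by rewrite hq0; apply: mulr_le0_ge0; [apply: ltW | apply: le_trans qb].
have [x hx rx] := polyrcf.poly_ivt hb0 hprod.
case: (ltgtP 0 x) => [x0|x0|x0].
- by move: (qpos x x0); rewrite (eqP rx) eqxx.
- by move: hx; rewrite in_itv /= => /andP[hx _]; move: (lt_le_trans x0 hx); rewrite ltxx.
- by move: rx; rewrite /root -x0 hq0 (negbTE c1n0).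
Qed.

Lemma key (R : realType) (CP : {poly {poly R}}) (s : seq R[i]) (kh : R) :
  (forall k, map_poly (horner_eval k) CP \is monic) ->
  map_poly (real_complex R) (map_poly (horner_eval 0) CP) = 'X * \prod_(z <- s) ('X - z%:P) ->
  (forall z, z \in s -> complex.Re z < 0) ->
  0 < kh -> (forall k, 0 < k < kh -> 0 < (map_poly (horner_eval k) CP).[0]) ->
  exists kt, 0 < kt /\ forall k, 0 < k <= kt -> forall z,
    root (map_poly (real_complex R) (map_poly (horner_eval k) CP)) z -> complex.Re z < 0.
Proof.
move=> hmon hp0 hs kh0 hdet.
pose p k := map_poly (horner_eval k) CP.
pose N := (size CP).+2.
have hN : (1 < N)%N by [].
have sizep : forall k, (size (p k) <= N)%N.
  by move=> k; apply: leq_trans (size_map_le _ _) _; rewrite /N; apply: leq_trans (leqnSn _) (leqnSn _).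
pose c i k := (p k)`_i.
have cE : forall i k, c i k = (CP`_i).[k] by move=> i k; rewrite /c /p coef_map /= horner_evalE.
pose Lc i := \sum_(j < size (CP`_i)) `|(CP`_i)`_j|.
have Lc0 : forall i, 0 <= Lc i by move=> i; apply: sumr_ge0.
have b1 : forall i k, 0 <= k -> k <= 1 -> `|c i k - c i 0| <= k * Lc i.
  by move=> i k k0 k1; rewrite !cE; apply: poly_lip.
pose U i := `|c i 0| + Lc i.
have b2 : forall i k, 0 <= k -> k <= 1 -> `|c i k| <= U i.
  move=> i k k0 k1; have := b1 i k k0 k1; move: (Lc0 i) => L0.
  move=> h; apply: le_trans (_ : `|c i 0| + `|c i k - c i 0| <= _).
    by rewrite -{1}(subrK (c i 0) (c i k)) addrC; apply: ler_normD.
  rewrite lerD2l; apply: le_trans h _; rewrite ler_piMl //.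
pose K := 1 + \sum_(i < N) U i.
pose qs := \prod_(z <- s) (- complex.Re z).
have qs0 : 0 < qs.
  rewrite /qs big_seq; apply: prodr_gt0 => z zs; rewrite oppr_gt0; exact: hs.
pose Lp := \sum_(i < N) Lc i * K ^+ i.
pose G := Lp / qs.
pose W := \sum_(i < N) U i * i%:R.
have c1p : 0 < c 1%N 0 by apply: (c1_pos (hmon 0) hp0 hs).
have U0 : forall i, 0 <= U i by move=> i; rewrite addr_ge0.
have K0 : 0 <= K by rewrite addr_ge0 ?ler01 ?sumr_ge0.
have Lp0 : 0 <= Lp by rewrite sumr_ge0 // => i _; rewrite mulr_ge0 ?exprn_ge0.
have G0 : 0 <= G by rewrite divr_ge0 // ltW.
have W0 : 0 <= W by rewrite sumr_ge0 // => i _; rewrite mulr_ge0 ?ler0n.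
pose kt := Num.min (Num.min 1 (kh / 2)) (Num.min (1 / (G + 1)) (c 1%N 0 / (Lc 1%N + G * W + 1))).
have G1 : 0 < G + 1 by rewrite ltr_wpDl.
have D1 : 0 < Lc 1%N + G * W + 1 by rewrite ltr_wpDl // addr_ge0 // mulr_ge0.
exists kt; split.
  rewrite /kt !lt_min ltr01 /= divr_gt0 ?ltr0n //= divr_gt0 ?ltr01 //=.
  by rewrite divr_gt0.
move=> k /andP[k0 kkt] z rz.
move: kkt; rewrite /kt !le_min => /andP[/andP[k1 kh2] /andP[kg kc]].
rewrite ler_pdivlMr // in kg.
rewrite ler_pdivlMr // in kc.
have kkh : k < kh by apply: le_lt_trans kh2 _; rewrite ltr_pdivrMr ?ltr0n // ltr_pMr // ltr1n.
have kG : k * G <= 1 by move: kg; rewrite mulrDr mulr1 => h; lra.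
have kc' : k * (Lc 1%N + G * W) < c 1%N 0 by move: kc; rewrite !mulrDr mulr1 => h; lra.
have k0' : 0 <= k := ltW k0.
have kG0 : 0 <= k * G by rewrite mulr_ge0.
rewrite ltNge; apply/negP => Rez.
pose RC := real_complex R.
have pcE : forall k' y, (map_poly RC (p k')).[y] = \sum_(i < N) (c i k')%:C%C * y ^+ i.
  move=> k' y; rewrite (horner_coef_wide y (_ : (size (map_poly RC (p k')) <= N)%N)).
    by apply: eq_bigr => i _; rewrite coef_map.
  by rewrite size_map_poly sizep.
change (is_true (root (map_poly RC (p k)) z)) in rz.
have hzK : `|z| <= K%:C%C.
  have := cauchyC (N:=N) (monic_map RC (hmon k)) _ rz.
  rewrite size_map_poly sizep => /(_ isT) /le_trans; apply.
  rewrite /K rmorphD rmorph1 rmorph_sum lerD2l; apply: ler_sum => i _.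
  rewrite coef_map normC_R lecR; exact: b2.
have hQ : qs%:C%C <= `|(\prod_(z0 <- s) ('X - z0%:P)).[z]|.
  rewrite horner_prod normr_prod /qs rmorph_prod !big_seq; apply: ler_prod => y ys.
  rewrite hornerXsubC; apply/andP; split.
    by rewrite ler0c oppr_ge0 ltW // hs.
  exact: Re_le_norm_sub Rez (hs y ys).
have hdiff : (map_poly RC (p 0)).[z] = \sum_(i < N) (c i 0 - c i k)%:C%C * z ^+ i.
  have e : (map_poly RC (p k)).[z] = 0 := eqP rz.
  transitivity ((map_poly RC (p 0)).[z] - (map_poly RC (p k)).[z]); first by rewrite e subr0.
  by rewrite !pcE -sumrB; apply: eq_bigr => i _; rewrite rmorphB mulrBl.
have hup : `|(map_poly RC (p 0)).[z]| <= (k * Lp)%:C%C.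
  rewrite hdiff; apply: le_trans (ler_norm_sum _ _ _) _.
  rewrite /Lp rmorphM rmorph_sum mulr_sumr; apply: ler_sum => i _.
  rewrite normrM normrX normC_R rmorphM rmorphXn mulrA -rmorphM.
  apply: ler_pM.
  - by rewrite ?ler0c normr_ge0.
  - by rewrite exprn_ge0.
  - by rewrite lecR distrC; exact: b1.
  - by apply: lerXn2r; rewrite ?nnegrE ?normr_ge0 ?ler0c.
have hp0' : map_poly RC (p 0) = 'X * \prod_(z <- s) ('X - z%:P) := hp0.
have hlow : `|z| * qs%:C%C <= (k * Lp)%:C%C.
  apply: le_trans hup; rewrite hp0' hornerM hornerX normrM.
  by rewrite ler_wpM2l ?normr_ge0.
have qsC : 0 < qs%:C%C by rewrite ltcR.
have hzr : `|z| <= (k * G)%:C%C.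
  by rewrite /G mulrA fmorph_div ler_pdivlMr.
have hb1 := b1 1%N k k0' k1.
have hWE : forall E : R, `|E| <= k * G * \sum_(i < N) `|c i k| * i%:R -> `|E| <= k * G * W.
  move=> E hE; apply: le_trans hE _; rewrite ler_wpM2l //.
  by apply: ler_sum => i _; rewrite ler_wpM2r ?ler0n // b2.
case: (eqVneq (complex.Im z) 0) => hIm.
  have zx : z = (complex.Re z)%:C%C by move: hIm; case: (z) => a b /= ->.
  move: Rez rz hzr; rewrite zx; set x := complex.Re z => Rez rz hzr.
  have px : (p k).[x] = 0.
    by apply: (@complexI R); rewrite rmorph0 -horner_map; exact: (eqP rz).
  have hx : `|x| <= k * G by rewrite -lecR -normC_R.
  have h00 : `|0 : R| <= k * G by rewrite normr0.
  have [E [hE1 hE2]] := diff_est (fun i => c i k) hN hx h00 kG.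
  move: hE1; rewrite -!(horner_coef_wide _ (sizep k)) px => hE1.
  have hE := hWE E hE2.
  have hd := hdet k; rewrite k0 kkh /= in hd.
  move: hb1 hE => /ler_normlP [h1 h1'] /ler_normlP [h2 h2'].
  have hpos : 0 < c 1%N k + E by lra.
  have := mulr_ge0 Rez (ltW hpos); rewrite subr0 in hE1; lra.
pose w := (z^*)%C.
have hcw : map_poly conjc (map_poly RC (p k)) = map_poly RC (p k).
  by rewrite -map_poly_comp; apply: eq_map_poly => y /=; exact: conjc_real.
have rw : root (map_poly RC (p k)) w by rewrite -complex_root_conj hcw.
have hw : `|w| <= (k * G)%:C%C by rewrite normcJ.
have kGC : (k * G)%:C%C <= 1 by rewrite -(rmorph1 RC) lecR.
have [E [hE1 hE2]] := diff_est (fun i => (c i k)%:C%C) hN hzr hw kGC.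
move: hE1; rewrite -!pcE (eqP rz) (eqP rw) subrr => hE1.
have zw : z - w != 0.
  apply/negP => /eqP e; move/eqP: hIm; apply.
  move/(congr1 (@complex.Im R)): e; rewrite raddfB /w /=.
  by case: (z) => a b /= e; lra.
have : (c 1%N k)%:C%C + E = 0.
  by move: hE1 => /esym /eqP; rewrite mulf_eq0 (negbTE zw) /= => /eqP.
move=> /eqP; rewrite addr_eq0 => /eqP hE.
have h1 : `|c 1%N k| <= k * G * W.
  rewrite -lecR -normC_R hE normrN; apply: le_trans hE2 _.
  rewrite [X in _ <= X]rmorphM; apply: ler_wpM2l; first by rewrite ler0c.
  rewrite /W rmorph_sum; apply: ler_sum => i _; rewrite normC_R rmorphM rmorph_nat.
  by rewrite ler_wpM2r ?ler0n // lecR b2.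
move: hb1 h1 => /ler_normlP [h1 h1'] /ler_normlP [h2 h2'].
clear -h1 h1' h2 h2' kc'; lra.
Qed.

Lemma char0 (R : comNzRingType) n (M : 'M[R]_n) : (char_poly M).[0] = \det (- M).
Proof.
rewrite /char_poly -horner_evalE -det_map_mx; congr (\det _); apply/matrixP => i j.
by rewrite !mxE /= horner_evalE; case: (i == j); rewrite /= ?hornerE.
Qed.

Lemma factorX (F : idomainType) (n : nat) (P Q : {poly F}) :
  P \is monic -> size P = n.+1 -> Q \is monic -> size Q = n -> (exists r, P = r * Q) ->
  root P 0 -> Q.[0] != 0 -> P = 'X * Q.
Proof.
move=> mP sP mQ sQ [r hr] rP Q0.
have Qn0 : Q != 0 by apply: monic_neq0.
have rn0 : r != 0 by apply/eqP => r0; move: sP; rewrite hr r0 mul0r size_poly0.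
have sr : size r = 2%N.
  move: sP; rewrite hr size_mul // sQ => h.
  have : size r != 0%N by rewrite size_poly_eq0.
  move: h; clear; lia.
have r0 : root r 0.
  move: rP; rewrite /root hr hornerM mulf_eq0 (negbTE Q0) orbF //.
have [r' hr'] := factor_theorem _ _ r0.
rewrite subr0 in hr'.
have r'n0 : r' != 0 by apply/eqP => e; move: rn0; rewrite hr' e mul0r eqxx.
have sr' : size r' = 1%N by move: sr; rewrite hr' size_mulX // => -[].
have [c hc] : exists c, r' = c%:P by exists (r'`_0); apply: size1_polyC; rewrite sr'.
have c1 : c = 1.
  move/monicP: mP; rewrite hr lead_coefM hr' lead_coefMX hc lead_coefC.
  by move/monicP: mQ => ->; rewrite mulr1.
by rewrite hr hr' hc c1 mul1r mulrC.
Qed.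

Lemma ub_seq (R : realType) (r : seq R[i]) : (forall z, z \in r -> complex.Re z < 0) ->
  exists2 b : R, b < 0 & forall z, z \in r -> complex.Re z <= b.
Proof.
elim: r => [|a r IH] h; first by exists (-1) => //; rewrite oppr_lt0 ltr01.
have [b b0 hb] : exists2 b : R, b < 0 & forall z, z \in r -> complex.Re z <= b.
  by apply: IH => z zr; apply: h; rewrite in_cons zr orbT.
exists (Num.max (complex.Re a) b); first by rewrite gt_max b0 h ?mem_head.
move=> z; rewrite in_cons => /orP[/eqP -> | zr]; first by rewrite le_max lexx.
by rewrite le_max hb ?orbT.
Qed.

Lemma sa_neg (R : realType) (P : {poly R[i]}) : (1 < size P)%N ->
  (forall z, root P z -> complex.Re z < 0) ->
  sup [set complex.Re z | z in [set z | root P z]] < 0.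
Proof.
move=> sP hP.
have [r hr] := closed_field_poly_normal P.
have lc0 : lead_coef P != 0 by rewrite lead_coef_eq0 -size_poly_gt0 (ltn_trans _ sP).
have inr : forall z, root P z = (z \in r) by move=> z; rewrite hr rootZ // root_prod_XsubC.
have [b b0 hb] := @ub_seq R r (fun z zr => hP z (eq_ind _ is_true zr _ (esym (inr z)))).
apply: le_lt_trans b0; apply: ge_sup.
  case: r hr inr hb => [|a r] hr inr hb.
    by move: sP; rewrite hr big_nil -mul_polyC mulr1 size_polyC; case: (_ != _).
  by exists (complex.Re a); exists a => //=; rewrite inr mem_head.
by move=> y [z /= rz <-]; apply: hb; rewrite -inr.
Qed.

Unset Implicit Arguments.

Theorem lemma2 (R : realType) (n m : nat) (B : 'M[int]_(n, m)) (C : 'M[int]_(m, n))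
  (dm dp : 'rV[R]_m) (J2 J4 : 'M[R]_n) :
  (0 < n)%N -> (0 < m)%N ->
  (forall j, 0 <= dm 0 j <= dp 0 j) ->
  J2^T = J2 -> J4^T = J4 ->
  indefinite J2 -> neg_semidef J4 ->
  (exists kb : R, neg_def (kb ^+ 2 *: J2 + kb ^+ 4 *: J4)) ->
  (forall d : 'rV[R]_m, in_box dm dp d ->
     \det (intR R B *m diag_mx d *m intR R C) = 0 /\
     neg_eigs_mult (intR R B *m diag_mx d *m intR R C) n.-1) ->
  (exists v : 'cV[R]_n, v != 0 /\ (forall i, 0 <= v i 0) /\ v^T *m intR R B = 0) ->
  forall d : 'rV[R]_m, in_box dm dp d ->
    initially_positive (fun k : R => \det (- Mk B C d J2 J4 k)) ->
    exists kt : R, 0 < kt /\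
      forall k : R, 0 < k <= kt -> spectral_abscissa (Mk B C d J2 J4 k) < 0.
Proof.
move=> n0 _ _ _ _ _ _ _ Hd _ d hbox [kh [kh0 hkh]].
have [detA0 [s [ss [hs hdiv]]]] := Hd d hbox.
set A0 := intR R B *m diag_mx d *m intR R C in detA0 hdiv.
pose Mp : 'M[{poly R}]_n := map_mx polyC A0 + 'X^2 *: map_mx polyC J2 + 'X^4 *: map_mx polyC J4.
pose CP := char_poly Mp.
have hCP : forall k, map_poly (horner_eval k) CP = char_poly (Mk B C d J2 J4 k).
  move=> k; rewrite /CP map_char_poly; congr (char_poly _).
  apply/matrixP => i j; rewrite /Mk !mxE /= !horner_evalE.
  by rewrite !hornerE.
pose RC := real_complex R.
have hcmx : forall M : 'M[R]_n, char_poly (cmx M) = map_poly RC (char_poly M).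
  by move=> M; rewrite map_char_poly.
have M0 : Mk B C d J2 J4 0 = A0 by rewrite /Mk expr0n /= scale0r addr0 expr0n scale0r addr0.
have key' := @key R CP s kh.
have Q0 : (\prod_(z <- s) ('X - z%:P)).[0] != 0 :> R[i].
  rewrite horner_prod prodf_seq_neq0; apply/allP => z zs /=.
  rewrite hornerXsubC sub0r oppr_eq0.
  by apply/eqP => z0; move: (hs z zs); rewrite z0 /= ltxx.
have hp0 : map_poly RC (map_poly (horner_eval 0) CP) = 'X * \prod_(z <- s) ('X - z%:P).
  rewrite hCP M0 -hcmx.
  apply: (@factorX _ n).
  - exact: char_poly_monic.
  - exact: size_char_poly.
  - exact: monic_prod_XsubC.
  - by rewrite size_prod_XsubC ss prednK.
  - by apply/dvdpP.
  - rewrite hcmx /root -(rmorph0 RC) horner_map char0 -scaleN1r detZ detA0 mulr0.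
    by rewrite rmorph0.
  - exact: Q0.
have hmon : forall k, map_poly (horner_eval k) CP \is monic.
  by move=> k; rewrite hCP char_poly_monic.
have hdet : forall k, 0 < k < kh -> 0 < (map_poly (horner_eval k) CP).[0].
  by move=> k hk; rewrite hCP char0; exact: hkh.
have [kt [kt0 hkt]] := key' hmon hp0 hs kh0 hdet.
exists kt; split => // k hk.
rewrite /spectral_abscissa /eigenvalues hcmx.
apply: sa_neg.
  by rewrite size_map_poly size_char_poly ltnS.
by move=> z rz; apply: (hkt k hk); rewrite hCP.
Qed.
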